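(* Let $\mathcal M=\{M^{(\lambda)}:\lambda\in\mathbb R_{>0}\}$ be a quasianalytic weight matrix. Then there exists a quasianalytic weight sequence $L$ such that $M^{(\lambda)}\vartriangleleft L$ for all $\lambda\in\mathbb R_{>0}$; in particular $\mathcal E_{\{\mathcal M\}}(U)\subseteq\mathcal E_{(L)}(U)$ for every non-empty open $U\subseteq\mathbb R^r$.
   Context: For a sequence $M=(M_p)_{p\in\mathbb N}$ of positive reals write $m_p:=M_p/p!$. $M$ is a weight sequence if $1=M_0\le M_1$, $M_p^2\le M_{p-1}M_{p+1}$ for all $p\ge1$, and $\liminf_{p\to\infty}m_p^{1/p}>0$; it is quasianalytic if $\sum_{p\ge1}M_{p-1}/M_p=+\infty$. A weight matrix is a family $\mathcal M=\{M^{(\lambda)}:\lambda\in\mathbb R_{>0}\}$ of weight sequences with $M^{(\lambda)}_p\le M^{(\kappa)}_p$ for all $p$ whenever $\lambda\le\kappa$; it is quasianalytic if every $M^{(\lambda)}$ is quasianalytic. For sequences $M,N$: $M\vartriangleleft N$ means $\lim_{p\to\infty}(M_p/N_p)^{1/p}=0$. For $U\subseteq\mathbb R^r$ open, $K\subseteq U$ compact, $h>0$: $\|f\|^M_{K,h}:=\sup_{\alpha\in\mathbb N^r,x\in K}|\partial^\alpha f(x)|/(h^{|\alpha|}M_{|\alpha|})$. $\mathcal E_{(L)}(U)$ consists of smooth $f$ with $\|f\|^L_{K,h}<\infty$ for all compact $K\subseteq U$ and all $h>0$. $\mathcal E_{\{\mathcal M\}}(U)$ consists of smooth $f$ such that for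 every compact $K\subseteq U$ there exist $\lambda>0$ and $h>0$ with $\|f\|^{M^{(\lambda)}}_{K,h}<\infty$. *)

(* Defs.v *)
From Stdlib Require Import Reals Factorial.
From mathcomp Require Import all_boot.

Open Scope R_scope.

Definition small_m (M : nat -> R) (p : nat) : R := M p / INR (Factorial.fact p).

(* Weight sequence: positive, 1 = M_0 <= M_1, log-convex,
   liminf_{p -> oo} m_p^{1/p} > 0 (written out: there are c > 0 and N with
   m_p^{1/p} >= c for all p >= N). *)
Definition weight_sequence (M : nat -> R) : Prop :=
  (forall p, 0 < M p) /\
  M 0%nat = 1 /\ M 0%nat <= M 1%nat /\
  (forall p, (1 <= p)%nat -> M p ^ 2 <= M (p - 1)%nat * M (p + 1)%nat) /\
  (exists c, 0 < c /\ exists N, forall p, (N <= p)%nat -> (1 <= p)%nat ->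
       c <= Rpower (small_m M p) (/ INR p)).

(* Quasianalytic: sum_{p>=1} M_{p-1}/M_p = +oo (partial sums unbounded). *)
Definition quasianalytic (M : nat -> R) : Prop :=
  forall B : R, exists n : nat,
    B < sum_f_R0 (fun k => M k / M (S k)) n.

Definition weight_matrix (MM : R -> nat -> R) : Prop :=
  (forall lam, 0 < lam -> weight_sequence (MM lam)) /\
  (forall lam kap, 0 < lam -> lam <= kap -> forall p, MM lam p <= MM kap p).

Definition quasianalytic_matrix (MM : R -> nat -> R) : Prop :=
  forall lam, 0 < lam -> quasianalytic (MM lam).

Definition lhd (M N : nat -> R) : Prop :=
  Un_cv (fun p => Rpower (M p / N p) (/ INR p)) 0.

Definition vec (r : nat) := 'I_r -> R.

Definition open_vec {r : nat} (U : vec r -> Prop) : Prop :=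
  forall x, U x -> exists eps, 0 < eps /\
    forall y : vec r, (forall i, Rabs (y i - x i) < eps) -> U y.

(* compact in R^r = closed and bounded (Heine-Borel) *)
Definition compact_vec {r : nat} (K : vec r -> Prop) : Prop :=
  (exists B, forall x, K x -> forall i, Rabs (x i) <= B) /\
  (forall (u : nat -> vec r) (x : vec r),
      (forall n, K (u n)) -> (forall i, Un_cv (fun n => u n i) (x i)) -> K x).

Definition shift {r : nat} (x : vec r) (i : 'I_r) (t : R) : vec r :=
  fun j => if j == i then x j + t else x j.

Definition multi_index (r : nat) := 'I_r -> nat.

Definition mi_abs {r : nat} (a : multi_index r) : nat := (\sum_(i < r) a i)%N.

Definition mi_incr {r : nat} (a : multi_index r) (i : 'I_r) : multi_index r :=
  fun j => if j == i then S (a j) else a j.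

Definition continuous_at_vec {r : nat} (g : vec r -> R) (x : vec r) : Prop :=
  forall eps, 0 < eps -> exists del, 0 < del /\
    forall y : vec r, (forall i, Rabs (y i - x i) < del) -> Rabs (g y - g x) < eps.

(* D is the family of partial derivatives (D a = d^a f) of a smooth f on U:
   D 0 = f on U, every D a is continuous on U, and
   D (a + e_i) is the i-th partial derivative of D a on U. *)
Definition deriv_family {r : nat} (U : vec r -> Prop) (f : vec r -> R)
    (D : multi_index r -> vec r -> R) : Prop :=
  (forall x, U x -> D (fun _ => 0%nat) x = f x) /\
  (forall a x, U x -> continuous_at_vec (D a) x) /\
  (forall a i x, U x ->
      derivable_pt_lim (fun t => D a (shift x i t)) 0 (D (mi_incr a i) x)).

Definition smooth {r : nat} (U : vec r -> Prop) (f : vec r -> R) : Prop :=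
  exists D, deriv_family U f D.

Definition seminorm_finite {r : nat} (M : nat -> R) (D : multi_index r -> vec r -> R)
    (K : vec r -> Prop) (h : R) : Prop :=
  exists C, forall (a : multi_index r) x, K x ->
    Rabs (D a x) / (h ^ (mi_abs a) * M (mi_abs a)) <= C.

Definition E_beurling {r : nat} (L : nat -> R) (U : vec r -> Prop) (f : vec r -> R) : Prop :=
  exists D, deriv_family U f D /\
    forall K, compact_vec K -> (forall x, K x -> U x) ->
      forall h, 0 < h -> seminorm_finite L D K h.

Definition E_roumieu_matrix {r : nat} (MM : R -> nat -> R) (U : vec r -> Prop)
    (f : vec r -> R) : Prop :=
  exists D, deriv_family U f D /\
    forall K, compact_vec K -> (forall x, K x -> U x) ->
      exists lam h, 0 < lam /\ 0 < h /\ seminorm_finite (MM lam) D K h.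

(* Main.v *)
Require Import Defs.
From Stdlib Require Import Reals Lra Lia ClassicalEpsilon Arith.
From mathcomp Require Import all_boot zify.
Open Scope R_scope.


Lemma ws_pos {M} : weight_sequence M -> forall p, 0 < M p.
Proof. intros [H _]; exact H. Qed.

Lemma ws_mu_mono {M} : weight_sequence M ->
  forall k, M k / M k.-1 <= M k.+1 / M k.
Proof.
  intros HW k. pose proof (ws_pos HW) as Hp.
  destruct HW as [_ [H0 [H01 [Hlc _]]]].
  destruct k as [|k].
  - simpl. rewrite H0. rewrite H0 in H01. unfold Rdiv. rewrite Rinv_1. lra.
  - simpl. specialize (Hlc k.+1 ltac:(lia)).
    replace (k.+1 - 1)%N with k in Hlc by lia.
    replace (k.+1 + 1)%N with k.+2 in Hlc by lia.
    pose proof (Hp k); pose proof (Hp k.+1); pose proof (Hp k.+2).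
    apply (Rmult_le_reg_r (M k * M k.+1)). nra.
    replace (M k.+1 / M k * (M k * M k.+1)) with (M k.+1 ^ 2) by (field; lra).
    replace (M k.+2 / M k.+1 * (M k * M k.+1)) with (M k * M k.+2) by (field; lra).
    exact Hlc.
Qed.

Lemma ws_mu_ge1 {M} : weight_sequence M -> forall k, 1 <= M k / M k.-1.
Proof.
  intros HW k. pose proof (ws_pos HW) as Hp. induction k as [|k IH].
  - simpl. unfold Rdiv. rewrite Rinv_r; [lra|]. specialize (Hp 0%N); lra.
  - eapply Rle_trans; [exact IH|]. exact (ws_mu_mono HW k).
Qed.

Lemma ws_ge1 {M} : weight_sequence M -> forall k, 1 <= M k.
Proof.
  intros HW k. pose proof (ws_pos HW) as Hp. induction k as [|k IH].
  - destruct HW as [_ [H0 _]]; lra.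
  - pose proof (ws_mu_ge1 HW k.+1) as H. simpl in H.
    specialize (Hp k). apply (Rmult_le_compat_r (M k)) in H; [|lra].
    replace (M k.+1 / M k * M k) with (M k.+1) in H by (field; lra). lra.
Qed.

Fixpoint bsum (g : nat -> R) (a n : nat) : R :=
  match n with O => 0 | S n' => bsum g a n' + g (a + n')%N end.

Lemma bsum_ext g h a n : (forall i, (i < n)%N -> g (a + i)%N = h (a + i)%N) ->
  bsum g a n = bsum h a n.
Proof.
  induction n as [|n IH]; intros H; simpl; [reflexivity|].
  rewrite IH; [|intros i Hi; apply H; lia]. rewrite H; [reflexivity|lia].
Qed.

Lemma bsum_le g h a n : (forall i, g i <= h i) -> bsum g a n <= bsum h a n.
Proof. intros H; induction n; simpl; [lra|]. specialize (H (a+n)%N); lra. Qed.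

Lemma bsum_scal c g a n : bsum (fun k => c * g k) a n = c * bsum g a n.
Proof. induction n; simpl; [ring|]. rewrite IHn; ring. Qed.

Lemma bsum_add g a n m : bsum g a (n + m)%N = bsum g a n + bsum g (a + n)%N m.
Proof.
  induction m as [|m IH]; simpl.
  - replace (n + 0)%N with n by lia. ring.
  - replace (n + m.+1)%N with (n + m).+1 by lia. simpl. rewrite IH.
    replace (a + (n + m))%N with (a + n + m)%N by lia. ring.
Qed.

Lemma bsum_nonneg g a n : (forall i, 0 <= g i) -> 0 <= bsum g a n.
Proof. intros H; induction n; simpl; [lra|]. specialize (H (a+n)%N); lra. Qed.

Lemma bsum_shift g a m : bsum g a m.+1 = g a + bsum g a.+1 m.
Proof.
  induction m as [|m IH].
  - simpl. replace (a + 0)%N with a by lia. ring.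
  - change (bsum g a m.+2) with (bsum g a m.+1 + g (a + m.+1)%N).
    rewrite IH. simpl. replace (a + m.+1)%N with (a.+1 + m)%N by lia. ring.
Qed.

Lemma sum_bsum g n : sum_f_R0 g n = bsum g 0 n.+1.
Proof.
  induction n as [|n IH].
  - simpl. rewrite add0n. ring.
  - change (sum_f_R0 g n.+1) with (sum_f_R0 g n + g n.+1). rewrite IH.
    change (bsum g 0 n.+2) with (bsum g 0 n.+1 + g (0 + n.+1)%N).
    rewrite add0n. reflexivity.
Qed.


Definition mu (A : nat -> nat -> R) (j k : nat) : R := A j k / A j k.-1.
Definition cc (j : nat) : R := INR j.+1.
Definition gblk (A : nat -> nat -> R) (j : nat) (Lm : R) (k : nat) : R :=
  / Rmax Lm (cc j * mu A j k).

Fixpoint st (A : nat -> nat -> R) (nxt : nat -> nat -> R -> nat) (j : nat) : nat * R :=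
  match j with
  | O => (O, 1)
  | S j' => let s := st A nxt j' in
            let q := (fst s + nxt j' (fst s) (snd s))%N in
            (q, Rmax (Rmax (snd s) (cc j' * mu A j' q)) (cc j'.+1 ^ q * A j'.+1 q))
  end.

Definition pp A nxt j := fst (st A nxt j).
Definition Lam A nxt j := snd (st A nxt j).

Fixpoint blk A nxt (k : nat) : nat :=
  match k with
  | O => O
  | S k' => let b := blk A nxt k' in if (pp A nxt b.+1 <= k'.+1)%N then b.+1 else b
  end.

Definition lam A nxt (k : nat) : R :=
  Rmax (Lam A nxt (blk A nxt k)) (cc (blk A nxt k) * mu A (blk A nxt k) k).

Fixpoint LL A nxt (p : nat) : R :=
  match p with O => 1 | S p' => LL A nxt p' * lam A nxt p'.+1 end.

Lemma cc_pos j : 0 < cc j.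
Proof. unfold cc. apply lt_0_INR. lia. Qed.
Lemma cc_ge1 j : 1 <= cc j.
Proof. unfold cc. rewrite S_INR. pose proof (pos_INR j). lra. Qed.
Lemma cc_mono j i : (j <= i)%N -> cc j <= cc i.
Proof. intros H. unfold cc. apply le_INR. lia. Qed.

Lemma Rpower_inv_pow c p : 0 < c -> (0 < p)%N -> Rpower (/ c ^ p) (/ INR p) = / c.
Proof.
  intros Hc Hp. unfold Rpower.
  assert (HI : INR p <> 0) by (apply not_0_INR; lia).
  rewrite ln_Rinv; [|apply pow_lt; lra]. rewrite ln_pow; [|lra].
  replace (/ INR p * - (INR p * ln c)) with (- ln c) by (field; exact HI).
  rewrite exp_Ropp exp_ln; [reflexivity|lra].
Qed.

Section Constr.
Variable A : nat -> nat -> R.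
Variable nxt : nat -> nat -> R -> nat.
Hypothesis HA : forall j, weight_sequence (A j).
Hypothesis HAle : forall j k, A j k <= A j.+1 k.
Hypothesis Hnxt : forall j p Lm,
  (0 < nxt j p Lm)%N /\ 1 <= bsum (gblk A j Lm) p (nxt j p Lm).

Notation pp := (pp A nxt).
Notation Lam := (Lam A nxt).
Notation blk := (blk A nxt).
Notation lam := (lam A nxt).
Notation LL := (LL A nxt).

Lemma pp_S j : pp j.+1 = (pp j + nxt j (pp j) (Lam j))%N.
Proof. reflexivity. Qed.

Lemma Lam_S j : Lam j.+1 =
  Rmax (Rmax (Lam j) (cc j * mu A j (pp j.+1))) (cc j.+1 ^ pp j.+1 * A j.+1 (pp j.+1)).
Proof. reflexivity. Qed.

Lemma pp_lt j : (pp j < pp j.+1)%N.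
Proof. rewrite pp_S. destruct (Hnxt j (pp j) (Lam j)) as [H _]. lia. Qed.

Lemma pp_ltm j i : (j < i)%N -> (pp j < pp i)%N.
Proof.
  intros H. induction i as [|i IH]; [lia|].
  pose proof (pp_lt i). destruct (j == i) eqn:E.
  - move/eqP: E => ->. exact (pp_lt i).
  - move/eqP: E => E. assert (j < i)%N by lia. specialize (IH H1). lia.
Qed.

Lemma pp_ge j : (j <= pp j)%N.
Proof. induction j; [lia|]. pose proof (pp_lt j). lia. Qed.

Lemma Lam_mono j : Lam j <= Lam j.+1.
Proof. rewrite Lam_S. unfold Rmax. repeat destruct Rle_dec; lra. Qed.

Lemma Lam_ge1 j : 1 <= Lam j.
Proof.
  induction j as [|j IH]. unfold Lam; simpl; lra. pose proof (Lam_mono j). lra.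
Qed.


Lemma blk_inv k : (pp (blk k) <= k)%N /\ (k < pp (blk k).+1)%N.
Proof.
  induction k as [|k [IH1 IH2]].
  - simpl. unfold pp at 1; simpl. pose proof (pp_lt 0). split; lia.
  - simpl. destruct (pp (blk k).+1 <= k.+1)%N eqn:E.
    + pose proof (pp_lt (blk k).+1). split; lia.
    + split; lia.
Qed.
Lemma blk_S k : (blk k.+1 = blk k) \/ (blk k.+1 = (blk k).+1 /\ pp (blk k).+1 = k.+1).
Proof.
  pose proof (blk_inv k) as [H1 H2].
  simpl. destruct (pp (blk k).+1 <= k.+1)%N eqn:E.
  - right. split; [reflexivity|lia].
  - left; reflexivity.
Qed.

Lemma blk_ge j k : (pp j <= k)%N -> (j <= blk k)%N.
Proof.
  intros H. destruct (blk_inv k) as [_ H2].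
  destruct (le_lt_dec j (blk k)) as [|Hlt]; [lia|].
  assert ((blk k).+1 <= j)%N by lia.
  destruct (le_lt_dec j (blk k).+1) as [Hle|Hlt2].
  - assert (Hj : j = (blk k).+1) by lia. subst j. lia.
  - pose proof (pp_ltm _ _ ltac:(exact (introT leP Hlt2))). lia.
Qed.

Lemma blk_eq j k : (pp j <= k)%N -> (k < pp j.+1)%N -> blk k = j.
Proof.
  intros H1 H2. pose proof (blk_ge _ _ H1).
  destruct (blk_inv k) as [H3 _].
  destruct (le_lt_dec (blk k) j) as [|Hlt]; [lia|].
  assert (j.+1 <= blk k)%N by lia.
  destruct (le_lt_dec (blk k) j.+1) as [Hle|Hlt2].
  - assert (Hb : blk k = j.+1) by lia. rewrite Hb in H3. lia.
  - pose proof (pp_ltm _ _ ltac:(exact (introT leP Hlt2))). lia.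
Qed.

Lemma mu_pos j k : 0 < mu A j k.
Proof. unfold mu. pose proof (ws_pos (HA j)). apply Rdiv_lt_0_compat; auto. Qed.
Lemma mu_ge1 j k : 1 <= mu A j k.
Proof. exact (ws_mu_ge1 (HA j) k). Qed.
Lemma mu_mono j k : mu A j k <= mu A j k.+1.
Proof. exact (ws_mu_mono (HA j) k). Qed.

Lemma lam_ge1 k : 1 <= lam k.
Proof. unfold lam. pose proof (Lam_ge1 (blk k)). unfold Rmax; destruct Rle_dec; lra. Qed.

Lemma lam_mono k : lam k <= lam k.+1.
Proof.
  destruct (blk_S k) as [E|[E1 E2]]; unfold lam.
  - rewrite E. pose proof (cc_pos (blk k)). pose proof (mu_mono (blk k) k).
    apply Rle_max_compat_l. apply Rmult_le_compat_l; lra.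
  - rewrite E1. set b := blk k. rewrite Lam_S. fold b in E2. rewrite E2.
    pose proof (cc_pos b). pose proof (mu_mono b k).
    assert (cc b * mu A b k <= cc b * mu A b k.+1) by (apply Rmult_le_compat_l; lra).
    unfold Rmax; repeat destruct Rle_dec; lra.
Qed.

Lemma LL_ge1 p : 1 <= LL p.
Proof.
  induction p; simpl; [lra|]. pose proof (lam_ge1 p.+1). nra.
Qed.

Lemma LL_pos p : 0 < LL p.
Proof. pose proof (LL_ge1 p); lra. Qed.

Lemma A_mono j i k : (j <= i)%N -> A j k <= A i k.
Proof.
  intros H. induction i as [|i IH].
  - replace j with 0%N by lia. lra.
  - destruct (le_lt_dec j i) as [Hle|Hlt].
    + specialize (IH ltac:(lia)). pose proof (HAle i k). lra.
    + replace j with i.+1 by lia. lra.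
Qed.

Lemma LL_lower p : cc (blk p) ^ p * A (blk p) p <= LL p.
Proof.
  induction p as [|p IH].
  - simpl. rewrite (proj1 (proj2 (HA 0%N))). lra.
  - destruct (blk_S p) as [E|[E1 E2]].
    + change (LL p.+1) with (LL p * lam p.+1). unfold lam. rewrite E.
      set b := blk p. fold b in IH. change (cc b ^ p.+1) with (cc b * cc b ^ p).
      assert (Hmu : A b p.+1 = A b p * mu A b p.+1).
      { unfold mu. simpl. pose proof (ws_pos (HA b) p). field. lra. }
      rewrite Hmu.
      pose proof (cc_pos b). pose proof (mu_pos b p.+1).
      pose proof (ws_pos (HA b) p). pose proof (pow_lt (cc b) p ltac:(lra)).
      apply Rle_trans with (LL p * (cc b * mu A b p.+1)).
      * replace (cc b * cc b ^ p * (A b p * mu A b p.+1)) with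
          ((cc b ^ p * A b p) * (cc b * mu A b p.+1)) by ring.
        apply Rmult_le_compat_r; [nra|exact IH].
      * apply Rmult_le_compat_l; [pose proof (LL_pos p); lra|]. apply Rmax_r.
    + change (LL p.+1) with (LL p * lam p.+1). unfold lam. rewrite E1.
      pose proof (LL_ge1 p). set b := blk p.
      assert (H2 : cc b.+1 ^ p.+1 * A b.+1 p.+1 <= Lam b.+1).
      { rewrite Lam_S. fold b in E2. rewrite E2. apply Rmax_r. }
      assert (H3 : Lam b.+1 <= Rmax (Lam b.+1) (cc b.+1 * mu A b.+1 p.+1)) by apply Rmax_l.
      assert (H4 : 1 <= Rmax (Lam b.+1) (cc b.+1 * mu A b.+1 p.+1)) by (pose proof (Lam_ge1 b.+1); lra).
      nra.
Qed.

Lemma ginv_bounds k : 0 < / lam k <= 1.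
Proof.
  pose proof (lam_ge1 k). split.
  - apply Rinv_0_lt_compat; lra.
  - rewrite -Rinv_1. apply Rinv_le_contravar; lra.
Qed.

Lemma block_sum j : 1 <= bsum (fun k => / lam k) (pp j) (nxt j (pp j) (Lam j)).
Proof.
  destruct (Hnxt j (pp j) (Lam j)) as [_ H].
  rewrite (bsum_ext (fun k => / lam k) (gblk A j (Lam j))); [exact H|].
  intros i Hi. unfold lam, gblk.
  rewrite (blk_eq j (pp j + i)%N); [reflexivity|lia|].
  rewrite (pp_S j). lia.
Qed.

Lemma partial_big j : INR j <= bsum (fun k => / lam k) 0 (pp j).
Proof.
  induction j as [|j IH].
  - simpl. lra.
  - rewrite (pp_S j) bsum_add add0n. rewrite S_INR.
    pose proof (block_sum j). lra.
Qed.

Lemma sum_LL n : sum_f_R0 (fun k => LL k / LL k.+1) n = bsum (fun k => / lam k) 1 n.+1.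
Proof.
  assert (Hf : forall k, LL k / LL k.+1 = / lam k.+1).
  { intros k. change (LL k.+1) with (LL k * lam k.+1).
    pose proof (LL_pos k). pose proof (lam_ge1 k.+1).
    field. lra. }
  induction n as [|n IH].
  - change (sum_f_R0 (fun k => LL k / LL k.+1) 0) with (LL 0 / LL 1).
    change (bsum (fun k => / lam k) 1 1) with (0 + / lam (1 + 0)%N).
    rewrite Hf addn0. ring.
  - change (sum_f_R0 (fun k => LL k / LL k.+1) n.+1) with
      (sum_f_R0 (fun k => LL k / LL k.+1) n + LL n.+1 / LL n.+2).
    rewrite IH Hf. change (bsum (fun k => / lam k) 1 n.+2) with
      (bsum (fun k => / lam k) 1 n.+1 + / lam (1 + n.+1)%N).
    replace (1 + n.+1)%N with n.+2 by lia. reflexivity.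
Qed.

Lemma LL_quasi : quasianalytic LL.
Proof.
  intros B. destruct (INR_unbounded (B + 1)) as [j Hj].
  exists (pp j). rewrite sum_LL.
  set g := (fun k => / lam k).
  pose proof (partial_big j) as H1. fold g in H1.
  pose proof (bsum_shift g 0 (pp j)) as H2.
  change (bsum g 1 (pp j).+1) with (bsum g 1 (pp j) + g (1 + pp j)%N).
  change (bsum g 0 (pp j).+1) with (bsum g 0 (pp j) + g (0 + pp j)%N) in H2.
  pose proof (ginv_bounds 0) as H3. pose proof (ginv_bounds (1 + pp j)%N) as H4.
  pose proof (ginv_bounds (0 + pp j)%N) as H5. unfold g in *. lra.
Qed.

Lemma LL_dom M n : (forall p, 0 < M p) -> (forall p, M p <= A n p) -> lhd M LL.
Proof.
  intros Hpos Hle eps He.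
  destruct (INR_unbounded (Rmax (INR n) (/ eps))) as [J HJ].
  exists (pp J + 1)%N. intros p Hp.
  unfold R_dist. rewrite Rminus_0_r.
  set b := blk p.
  assert (HbJ : (J <= b)%N) by (apply blk_ge; lia).
  assert (Hp0 : (0 < p)%N) by lia.
  pose proof (LL_lower p) as Hlow. fold b in Hlow.
  pose proof (LL_pos p) as HLp.
  pose proof (cc_pos b) as Hcb. pose proof (pow_lt (cc b) p ltac:(lra)) as Hcp.
  pose proof (ws_pos (HA b) p) as HAb.
  assert (Hnb : A n p <= A b p).
  { apply A_mono. unfold Rmax in HJ. destruct Rle_dec in HJ.
    - assert (INR n < INR J) by lra. apply INR_lt in H. lia.
    - assert (INR n < INR J) by lra. apply INR_lt in H. lia. }
  assert (Hq : M p / LL p <= / cc b ^ p).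
  { specialize (Hle p). specialize (Hpos p).
    apply Rle_trans with (A b p / (cc b ^ p * A b p)).
    - unfold Rdiv. apply Rmult_le_compat; try lra.
      + left; apply Rinv_0_lt_compat; lra.
      + apply Rinv_le_contravar; [nra|exact Hlow].
    - right. field. lra. }
  assert (Hrp : 0 < Rpower (M p / LL p) (/ INR p)) by (unfold Rpower; apply exp_pos).
  rewrite Rabs_pos_eq; [|lra].
  apply Rle_lt_trans with (/ cc b).
  - rewrite -(Rpower_inv_pow (cc b) p Hcb Hp0). apply Rle_Rpower_l.
    + left. apply Rinv_0_lt_compat, lt_0_INR. lia.
    + split; [|exact Hq]. apply Rdiv_lt_0_compat; [apply Hpos|lra].
  - assert (HJb : INR J <= INR b) by (apply le_INR; lia).
    unfold cc. rewrite S_INR.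
    assert (/ eps < INR b + 1) by (pose proof (Rmax_r (INR n) (/ eps)); lra).
    apply Rlt_le_trans with (/ / eps).
    + apply Rinv_lt_contravar; [|exact H]. pose proof (Rinv_0_lt_compat eps He). nra.
    + rewrite Rinv_inv. lra.
Qed.


Lemma LL_ws : weight_sequence LL.
Proof.
  split; [exact LL_pos|]. split; [reflexivity|]. split.
  { pose proof (LL_ge1 1). simpl. simpl in H. lra. }
  split.
  - intros p Hp. destruct p as [|p]; [lia|].
    replace (p.+1 - 1)%N with p by lia. replace (p.+1 + 1)%N with p.+2 by lia.
    change (LL p.+2) with (LL p.+1 * lam p.+2).
    change (LL p.+1) with (LL p * lam p.+1).
    pose proof (LL_pos p). pose proof (lam_ge1 p.+1). pose proof (lam_mono p.+1).
    assert (0 <= LL p * LL p * lam p.+1) by (apply Rmult_le_pos; [apply Rmult_le_pos|]; lra).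
    replace ((LL p * lam p.+1) ^ 2) with ((LL p * LL p * lam p.+1) * lam p.+1) by ring.
    replace (LL p * (LL p * lam p.+1 * lam p.+2)) with ((LL p * LL p * lam p.+1) * lam p.+2) by ring.
    apply Rmult_le_compat_l; lra.
  - destruct (HA 0%N) as [HP0 [_ [_ [_ [c [Hc [N HN]]]]]]].
    exists c; split; [exact Hc|]. exists N. intros p HNp Hp1.
    eapply Rle_trans; [apply (HN p); assumption|]. apply Rle_Rpower_l.
    + left. apply Rinv_0_lt_compat, lt_0_INR. lia.
    + unfold small_m. pose proof (INR_fact_lt_0 p). split.
      * apply Rdiv_lt_0_compat; auto.
      * unfold Rdiv. apply Rmult_le_compat_r; [left; apply Rinv_0_lt_compat; lra|].
        pose proof (LL_lower p). set b := blk p. fold b in H0.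
        pose proof (A_mono 0 b p ltac:(lia)).
        pose proof (pow_R1_Rle (cc b) p (cc_ge1 b)).
        pose proof (ws_pos (HA b) p). nra.
Qed.
End Constr.

Lemma bsum_succ g a n : bsum (fun k => g k.+1) a n = bsum g a.+1 n.
Proof.
  induction n as [|n IH]; simpl; [reflexivity|]. rewrite IH.
  replace (a + n).+1 with (a.+1 + n)%N by lia. reflexivity.
Qed.

Lemma nxt_ex M c Lm p : weight_sequence M -> quasianalytic M -> 0 < c ->
  exists n, (0 < n)%N /\ 1 <= bsum (fun k => / Rmax Lm (c * (M k / M k.-1))) p n.
Proof.
  intros HW HQ Hc.
  set h := fun k => M k.-1 / M k.
  set K := Rabs Lm + c.
  assert (HK : 0 < K) by (unfold K; pose proof (Rabs_pos Lm); lra).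
  assert (Hh : forall k, 0 <= h k).
  { intros k. unfold h. left. apply Rdiv_lt_0_compat; apply (ws_pos HW). }
  assert (C1 : forall k, / K * h k <= / Rmax Lm (c * (M k / M k.-1))).
  { intros k. pose proof (ws_mu_ge1 HW k) as Hm. pose proof (ws_pos HW k).
    pose proof (ws_pos HW k.-1).
    assert (E : / K * h k = / (K * (M k / M k.-1))) by (unfold h; field; split; lra).
    rewrite E. apply Rinv_le_contravar.
    - apply Rlt_le_trans with (c * (M k / M k.-1)); [nra|apply Rmax_r].
    - unfold K. pose proof (Rle_abs Lm). pose proof (Rabs_pos Lm).
      unfold Rmax; destruct Rle_dec; nra. }
  assert (C2 : forall n, sum_f_R0 (fun k => M k / M k.+1) n = bsum h 1 n.+1).
  { intros n. rewrite sum_bsum. rewrite -bsum_succ. reflexivity. }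
  destruct (HQ (K + bsum h 0 p)) as [n Hn]. rewrite C2 in Hn.
  pose proof (bsum_shift h 0 n.+1) as Hs. pose proof (Hh 0%N).
  assert (Hp : (p < n.+2)%N).
  { destruct (le_lt_dec n.+2 p) as [Hle|Hlt]; [|lia].
    pose proof (bsum_add h 0 n.+2 (p - n.+2)) as Ha.
    replace (n.+2 + (p - n.+2))%N with p in Ha by lia.
    pose proof (bsum_nonneg h (0 + n.+2)%N (p - n.+2) Hh). lra. }
  exists (n.+2 - p)%N. split; [lia|].
  pose proof (bsum_add h 0 p (n.+2 - p)) as Ha.
  replace (p + (n.+2 - p))%N with n.+2 in Ha by lia. rewrite add0n in Ha.
  eapply Rle_trans; [|apply bsum_le; exact C1]. rewrite bsum_scal.
  apply (Rmult_le_reg_l K); [exact HK|]. rewrite -Rmult_assoc Rinv_r; [|lra]. lra.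
Qed.


Lemma seq_bound (s : nat -> R) N : (forall q, (N <= q)%N -> s q <= 1) ->
  exists B, forall q, s q <= B.
Proof.
  intros H.
  assert (G : forall N, exists B, forall q, (q < N)%N -> s q <= B).
  { induction N0 as [|N0 [B HB]].
    - exists 0. intros q Hq. lia.
    - exists (Rmax B (s N0)). intros q Hq.
      destruct (q == N0) eqn:E.
      + move/eqP: E => ->. apply Rmax_r.
      + move/eqP: E => E. eapply Rle_trans; [apply HB; lia|apply Rmax_l]. }
  destruct (G N) as [B HB]. exists (Rmax B 1). intros q.
  destruct (le_lt_dec N q) as [Hle|Hlt].
  - eapply Rle_trans; [apply H; lia|apply Rmax_r].
  - eapply Rle_trans; [apply HB; lia|apply Rmax_l].
Qed.

Theorem mainTheorem9 (MM : R -> nat -> R) :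
  weight_matrix MM -> quasianalytic_matrix MM ->
  exists L : nat -> R,
    weight_sequence L /\ quasianalytic L /\
    (forall lam, 0 < lam -> lhd (MM lam) L) /\
    (forall (r : nat) (U : vec r -> Prop),
        open_vec U -> (exists x, U x) ->
        forall f, E_roumieu_matrix MM U f -> E_beurling L U f).
Proof.
  intros [HWS HMono] HQ.
  set A := fun j k => MM (INR j.+1) k.
  assert (Hpj : forall j, 0 < INR j.+1) by (intros j; apply lt_0_INR; lia).
  assert (HA : forall j, weight_sequence (A j)) by (intros j; apply HWS, Hpj).
  assert (HAle : forall j k, A j k <= A j.+1 k).
  { intros j k. apply HMono; [apply Hpj|]. apply le_INR. lia. }
  assert (HAQ : forall j, quasianalytic (A j)) by (intros j; apply HQ, Hpj).
  assert (Hex : forall j p Lm, exists n, (0 < n)%N /\ 1 <= bsum (gblk A j Lm) p n).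
  { intros j p Lm. exact (nxt_ex (A j) (cc j) Lm p (HA j) (HAQ j) (cc_pos j)). }
  set nxt := fun j p Lm => proj1_sig (constructive_indefinite_description _ (Hex j p Lm)).
  assert (Hnxt : forall j p Lm, (0 < nxt j p Lm)%N /\ 1 <= bsum (gblk A j Lm) p (nxt j p Lm)).
  { intros j p Lm. unfold nxt. exact (proj2_sig (constructive_indefinite_description _ (Hex j p Lm))). }
  assert (Hlhd : forall lm, 0 < lm -> lhd (MM lm) (LL A nxt)).
  { intros lm Hlm. destruct (INR_unbounded lm) as [n Hn].
    apply (LL_dom A nxt HA HAle Hnxt (MM lm) n).
    - apply (proj1 (HWS lm Hlm)).
    - intros p. apply HMono; [exact Hlm|]. rewrite S_INR. lra. }
  exists (LL A nxt). split; [exact (LL_ws A nxt HA HAle Hnxt)|].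
  split; [exact (LL_quasi A nxt Hnxt)|].
  split; [exact Hlhd|].
  intros r U HU Hne f [D [HD HK]]. exists D. split; [exact HD|].
  intros K HKc HKU h Hh.
  destruct (HK K HKc HKU) as [lm [h0 [Hlm [Hh0 [C HC]]]]].
  set L := LL A nxt.
  set M := MM lm.
  assert (HMp : forall q, 0 < M q) by (apply (proj1 (HWS lm Hlm))).
  assert (HLp : forall q, 0 < L q) by (apply (LL_pos A nxt)).
  set s := fun q => h0 ^ q * / h ^ q * (M q / L q).
  assert (Hs : exists B, forall q, s q <= B).
  { destruct (Hlhd lm Hlm (h / h0) ltac:(apply Rdiv_lt_0_compat; lra)) as [N HN].
    apply (seq_bound s N.+1). intros q Hq.
    specialize (HN q ltac:(lia)). unfold R_dist in HN. rewrite Rminus_0_r in HN.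
    change (MM lm) with M in HN. change (LL A nxt) with L in HN.
    set x := M q / L q.
    assert (Hx : 0 < x) by (apply Rdiv_lt_0_compat; auto).
    assert (HN' : Rpower x (/ INR q) < h / h0).
    { rewrite Rabs_pos_eq in HN; [exact HN|]. unfold Rpower; left; apply exp_pos. }
    clear HN. rename HN' into HN.
    set rr := Rpower x (/ INR q). fold rr in HN.
    assert (Hr : 0 < rr) by (unfold rr, Rpower; apply exp_pos).
    assert (Exq : x = rr ^ q).
    { rewrite -Rpower_pow; [|exact Hr]. unfold rr. rewrite Rpower_mult.
      rewrite Rinv_l; [|apply not_0_INR; lia]. rewrite Rpower_1; [reflexivity|exact Hx]. }
    unfold s. fold x. rewrite Exq -pow_inv -!Rpow_mult_distr.
    rewrite -(pow1 q). apply pow_incr. split.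
    - apply Rmult_le_pos; [apply Rmult_le_pos|]; [lra| left; apply Rinv_0_lt_compat; lra | lra].
    - apply (Rmult_le_reg_r h0); [lra|].
      replace (h0 * / h * rr * h0) with (h0 * h0 * / h * rr) by ring.
      apply Rlt_le in HN.
      assert (rr * h0 <= h) by (apply (Rmult_le_reg_r (/ h0)); [apply Rinv_0_lt_compat; lra|];
        replace (rr * h0 * / h0) with rr by (field; lra); exact HN).
      replace (h0 * h0 * / h * rr) with (h0 * (rr * h0) / h) by (field; lra).
      apply (Rmult_le_reg_r h); [lra|].
      replace (h0 * (rr * h0) / h * h) with (h0 * (rr * h0)) by (field; lra).
      nra. }
  destruct Hs as [B HB].
  exists (Rmax C 0 * B). intros a x Kx.
  set q := mi_abs a.
  specialize (HC a x Kx). fold q in HC. fold M in HC.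
  assert (Hhq : 0 < h ^ q) by (apply pow_lt; lra).
  assert (Hh0q : 0 < h0 ^ q) by (apply pow_lt; lra).
  pose proof (HMp q). pose proof (HLp q).
  assert (E : Rabs (D a x) / (h ^ q * L q) =
              Rabs (D a x) / (h0 ^ q * M q) * s q).
  { unfold s. field. repeat split; lra. }
  rewrite E. apply Rmult_le_compat.
  - unfold Rdiv; apply Rmult_le_pos; [apply Rabs_pos| left; apply Rinv_0_lt_compat; nra].
  - unfold s. apply Rmult_le_pos; [apply Rmult_le_pos; [lra| left; apply Rinv_0_lt_compat; lra]|].
    left; apply Rdiv_lt_0_compat; lra.
  - eapply Rle_trans; [exact HC|apply Rmax_l].
  - apply HB.
Qed.
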